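(* Let $l\geq 1$ and $f\in C^{l-1}(\mathbb{R})$, and set $T_l(t)=\frac{(1-t)^{l+1}}{t}f(1-t)$ for $t>0$. Then $$[D^{l-1}T_{l}](t)=(-1)^{l-1}\sum_{m=0}^{l-1}P_{m,l}(t)f^{(m)}(1-t),$$ where $$P_{m,l}(t)=\sum_{\nu=m}^{l-1}E_{\nu,m,l}\frac{(1-t)^{\nu+2}}{t^{\nu+l-m}},\qquad E_{\nu,m,l}=\frac{(l-1)!}{2^{\nu-m}m!}\binom{l+1}{\nu+2}\binom{l-1+\nu-m}{\nu-m}.$$
   Context: $D$ denotes the operator $(D\varphi)(t)=\frac{1}{t}\varphi'(t)$ acting on functions of $t$ (here applied to $t\mapsto T_l(t)$), and $D^{j}$ its $j$-fold iterate. $\binom{a}{b}=0$ if $b>a$ or $b<0$. *)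

(* Defs.v *)
From Stdlib Require Import Reals Arith.
From Coquelicot Require Import Coquelicot.
Open Scope R_scope.

Definition Ck (k : nat) (f : R -> R) : Prop :=
  forall m : nat, (m <= k)%nat ->
    (forall x, ex_derive_n f m x) /\ (forall x, continuous (Derive_n f m) x).

Definition binomR (a b : nat) : R := if Nat.leb b a then Binomial.C a b else 0.

Definition T (l : nat) (f : R -> R) : R -> R :=
  fun t => (1 - t) ^ (l + 1) / t * f (1 - t).

Definition Dop (phi : R -> R) : R -> R := fun t => Derive phi t / t.
Definition Diter (j : nat) (phi : R -> R) : R -> R := Nat.iter j Dop phi.

Definition E (nu m l : nat) : R :=
  INR (fact (l - 1)) / (2 ^ (nu - m) * INR (fact m))
  * binomR (l + 1) (nu + 2) * binomR (l - 1 + nu - m) (nu - m).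

Definition P (m l : nat) (t : R) : R :=
  sum_n_m (fun nu => E nu m l * ((1 - t) ^ (nu + 2) / t ^ (nu + l - m))) m (l - 1).

(* Main.v *)
Require Import Defs.
From Stdlib Require Import Reals Arith Lia Lra.
From Coquelicot Require Import Coquelicot.
Open Scope R_scope.
Definition term (f : R -> R) (a b m : nat) (t : R) : R :=
  (1 - t) ^ a / t ^ b * Derive_n f m (1 - t).

Lemma term_deriv f a b m t : 0 < t -> ex_derive (Derive_n f m) (1 - t) ->
 is_derive (term f a b m) t
   (t * (- INR a * term f (a-1) (b+1) m t - INR b * term f a (b+2) m t
         - term f a (b+1) (S m) t)).
Proof.
  intros Ht Hd. unfold term.
  auto_derive.
  - repeat split; try exact Hd; try (apply pow_nonzero; lra).
  - change (fun x => Derive_n f m x) with (Derive_n f m).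
    change (Derive (Derive_n f m)) with (Derive_n f (S m)).
    replace (1 + - t) with (1 - t) by ring.
    set (D1 := Derive_n f m (1 - t)). set (D2 := Derive_n f (S m) (1 - t)).
    rewrite !pow_add. 
    assert (t ^ b <> 0) by (apply pow_nonzero; lra).
    destruct b as [|b].
    + destruct a as [|a]; simpl; [field; lra|].
      replace (a - 0)%nat with a by lia. field. lra.
    + simpl (Init.Nat.pred (S b)). rewrite <- !tech_pow_Rmult in *.
      rewrite S_INR. assert (t ^ b <> 0) by (apply pow_nonzero; lra). destruct a as [|a]; simpl; [field; lra|].
      replace (a - 0)%nat with a by lia. try rewrite S_INR. assert (t ^ b <> 0) by (apply pow_nonzero; lra). field. split; lra.
Qed.
Definition cc (l j m B : nat) : R :=
  if (m + B <=? j)%nat then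
    INR (fact (l+1)) * INR (fact (j+B)) /
    (INR (fact (l+1-(j-m-B))) * INR (fact m) * INR (fact (j-m-B)) * 2^B * INR (fact B))
  else 0.

Lemma cc_val l j m B A : j = (m + B + A)%nat ->
  cc l j m B = INR (fact (l+1)) * INR (fact (j+B)) /
    (INR (fact (l+1-A)) * INR (fact m) * INR (fact A) * 2^B * INR (fact B)).
Proof.
  intros H. unfold cc. rewrite (proj2 (Nat.leb_le _ _)) by lia.
  replace (j - m - B)%nat with A by lia. reflexivity.
Qed.

Lemma cc_zero l j m B : (j < m + B)%nat -> cc l j m B = 0.
Proof.
  intros H. unfold cc. rewrite (proj2 (Nat.leb_gt _ _)) by lia. reflexivity.
Qed.

Lemma fact_SR n : INR (fact (S n)) = INR (S n) * INR (fact n).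
Proof. rewrite fact_simpl, mult_INR. reflexivity. Qed.

Lemma fnz n : INR (fact n) <> 0.
Proof. apply INR_fact_neq_0. Qed.

Lemma p2nz n : 2 ^ n <> 0.
Proof. apply pow_nonzero; lra. Qed.

Ltac setfacts := repeat match goal with |- context[INR (fact ?n)] =>
  let X := fresh "F" in let H := fresh "HF" in pose proof (fnz n) as H;
  set (X := INR (fact n)) in * end.

Ltac fin HA :=
  rewrite ?fact_SR; setfacts; rewrite ?HA; rewrite ?Nat.add_0_r; rewrite <- ?tech_pow_Rmult;
  repeat match goal with |- context[INR (?a - ?b)] =>
    let K := fresh "K" in let HK := fresh "HK" in pose proof (pos_INR (a - b)) as HK;
    set (K := INR (a - b)) in * end;
  repeat rewrite ?plus_INR, ?S_INR; rewrite ?INR_0;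
  repeat match goal with |- context[INR ?a] =>
    let K := fresh "K" in let HK := fresh "HK" in pose proof (pos_INR a) as HK;
    set (K := INR a) in * end;
  field; repeat split; try apply p2nz; try lra.

Lemma cc_rec l j m B : (j + 2 <= l)%nat ->
  cc l j m B * INR (l + 1 - (j - m - B))
  + match B with 0%nat => 0 | S B' => cc l j m B' * INR (1 + j + B') end
  + match m with 0%nat => 0 | S m' => cc l j m' B end
  = cc l (S j) m B.
Proof.
  intros Hl.
  destruct (le_lt_dec (m + B) j) as [H1|H1].
  - assert (HA : exists A, j = (m + B + A)%nat) by (exists (j - (m+B))%nat; lia).
    destruct HA as [A HA].
    replace (j - m - B)%nat with A by lia.
    rewrite (cc_val l j m B A HA).
    rewrite (cc_val l (S j) m B (S A)) by lia. try replace (l + 1 - S A)%nat with (l - A)%nat by lia.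
    replace (l + 1 - A)%nat with (S (l - A)) by lia.
    replace (l + 1 - S A)%nat with (l - A)%nat by lia.
    replace (S j + B)%nat with (S (j + B)) by lia.
    rewrite !fact_SR.
    destruct m as [|m'], B as [|B'].
    + simpl (fact 0). rewrite !Rplus_0_r. rewrite !S_INR.
      pose proof (fnz (l+1)). pose proof (fnz (j+0)). pose proof (fnz (l-A)). pose proof (fnz A).
      pose proof (pos_INR (l-A)). pose proof (pos_INR A).
      rewrite HA. rewrite ?Nat.add_0_r. simpl INR. field. repeat split; lra.
    + rewrite (cc_val l j 0 B' (S A)) by lia. try replace (l + 1 - S A)%nat with (l - A)%nat by lia.
      replace (j + S B')%nat with (S (j+B')) by lia. rewrite !fact_SR.
      fin HA.
    + rewrite (cc_val l j m' 0 (S A)) by lia. try replace (l + 1 - S A)%nat with (l - A)%nat by lia. fin HA.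
    + rewrite (cc_val l j (S m') B' (S A)) by lia. try replace (l + 1 - S A)%nat with (l - A)%nat by lia.
      rewrite (cc_val l j m' (S B') (S A)) by lia. try replace (l + 1 - S A)%nat with (l - A)%nat by lia.
      replace (j + S B')%nat with (S (j+B')) by lia. rewrite !fact_SR.
      fin HA.
  - destruct (Nat.eq_dec (m+B) (S j)) as [H2|H2].
    + rewrite (cc_zero l j m B) by lia. rewrite (cc_val l (S j) m B 0) by lia.
      replace (l+1-0)%nat with (l+1)%nat by lia.
      destruct m as [|m'], B as [|B'].
      * simpl in H2. lia.
      * assert (HA : j = B') by lia.
        rewrite (cc_val l j 0 B' 0) by lia. replace (l+1-0)%nat with (l+1)%nat by lia.
        replace (S j + S B')%nat with (S (S (j + B'))) by lia.
        fin HA.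
      * assert (HA : j = m') by lia.
        rewrite (cc_val l j m' 0 0) by lia. replace (l+1-0)%nat with (l+1)%nat by lia.
        replace (S j + 0)%nat with (S (j + 0)) by lia.
        fin HA.
      * assert (HA : j = (S m' + B')%nat) by lia.
        rewrite (cc_val l j (S m') B' 0) by lia.
        rewrite (cc_val l j m' (S B') 0) by lia. replace (l+1-0)%nat with (l+1)%nat by lia.
        replace (S j + S B')%nat with (S (S (j + B'))) by lia.
        replace (j + S B')%nat with (S (j + B')) by lia.
        fin HA.
    + rewrite (cc_zero l j m B) by lia. rewrite (cc_zero l (S j) m B) by lia.
      destruct m as [|m'], B as [|B'].
      * lra.
      * rewrite (cc_zero l j 0 B') by lia. lra.
      * rewrite (cc_zero l j m' 0) by lia. lra.
      * rewrite (cc_zero l j (S m') B') by lia. rewrite (cc_zero l j m' (S B')) by lia. lra.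
Qed.
Fixpoint sN (n : nat) (F : nat -> R) : R :=
  match n with 0%nat => 0 | S n => sN n F + F n end.

Lemma sN_ext n F G : (forall i, (i < n)%nat -> F i = G i) -> sN n F = sN n G.
Proof.
  induction n; simpl; intros H; [reflexivity|].
  rewrite IHn by (intros; apply H; lia). rewrite H by lia. reflexivity.
Qed.

Lemma sN_plus n F G : sN n (fun i => F i + G i) = sN n F + sN n G.
Proof. induction n; simpl; [lra|]. rewrite IHn. lra. Qed.

Lemma sN_scal n c F : sN n (fun i => c * F i) = c * sN n F.
Proof. induction n; simpl; [lra|]. rewrite IHn. lra. Qed.

Lemma sN_shift n F : sN (S n) F = F 0%nat + sN n (fun i => F (S i)).
Proof. induction n; simpl in *; [lra|]. rewrite IHn. lra. Qed.

Lemma sN_zero_tail k n F : (k <= n)%nat -> (forall i, (k <= i < n)%nat -> F i = 0) ->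
  sN n F = sN k F.
Proof.
  induction n; intros Hk H.
  - replace k with 0%nat by lia. reflexivity.
  - destruct (Nat.eq_dec k (S n)) as [->|Hne]; [reflexivity|].
    simpl. rewrite H by lia. rewrite IHn by (try lia; intros; apply H; lia). lra.
Qed.

Lemma sN_zero n F : (forall i, (i < n)%nat -> F i = 0) -> sN n F = 0.
Proof. intros H. rewrite (sN_zero_tail 0 n F) by (try lia; intros; apply H; lia). reflexivity. Qed.

Lemma sN_shiftback n h : h n = 0 ->
  sN (S n) h = sN (S n) (fun i => match i with 0%nat => 0 | S i' => h i' end).
Proof.
  intros H. transitivity (sN n h + h n); [reflexivity|]. rewrite sN_shift, H. simpl. rewrite Rplus_0_l, Rplus_0_r. reflexivity.
Qed.

Lemma is_derive_sN n (F : nat -> R -> R) F' t :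
  (forall i, (i < n)%nat -> is_derive (F i) t (F' i)) ->
  is_derive (fun x => sN n (fun i => F i x)) t (sN n F').
Proof.
  induction n; intros H; simpl.
  - apply (is_derive_const (V := R_NormedModule) 0 t).
  - apply (is_derive_plus (fun x => sN n (fun i => F i x)) (F n)).
    + apply IHn. intros; apply H; lia.
    + apply H; lia.
Qed.

Lemma double_shift n (X1 X2 X3 Tt : nat -> nat -> R) :
  (forall m, X2 m n = 0) -> (forall B, X3 n B = 0) ->
  sN (S n) (fun m => sN (S n) (fun B => X1 m B * Tt m B + X2 m B * Tt m (S B) + X3 m B * Tt (S m) B))
  = sN (S n) (fun m => sN (S n) (fun B =>
      (X1 m B + match B with 0%nat => 0 | S B' => X2 m B' end
              + match m with 0%nat => 0 | S m' => X3 m' B end) * Tt m B)).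
Proof.
  intros H2 H3.
  transitivity (sN (S n) (fun m => sN (S n) (fun B => X1 m B * Tt m B))
     + sN (S n) (fun m => sN (S n) (fun B => X2 m B * Tt m (S B)))
     + sN (S n) (fun m => sN (S n) (fun B => X3 m B * Tt (S m) B))).
  { rewrite <- !sN_plus. apply sN_ext. intros. rewrite <- !sN_plus. reflexivity. }
  rewrite (sN_shiftback n (fun m => sN (S n) (fun B => X3 m B * Tt (S m) B))).
  2:{ apply sN_zero. intros. rewrite H3. lra. }
  rewrite (sN_ext (S n) (fun m => sN (S n) (fun B => X2 m B * Tt m (S B)))
     (fun m => sN (S n) (fun B => match B with 0%nat => 0 | S B' => X2 m B' end * Tt m B))).
  2:{ intros m _. rewrite (sN_shiftback n (fun B => X2 m B * Tt m (S B))).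
      2:{ rewrite H2. lra. }
      apply sN_ext. intros [|B] _; lra. }
  rewrite <- !sN_plus. apply sN_ext. intros m _.
  destruct m as [|m].
  - rewrite Rplus_0_r, <- sN_plus. apply sN_ext. intros. lra.
  - rewrite <- !sN_plus. apply sN_ext. intros. lra.
Qed.

Definition G (l : nat) (f : R -> R) (j : nat) (t : R) : R :=
  (-1)^j * sN l (fun m => sN l (fun B => cc l j m B * term f (l+1-(j-m-B)) (1+j+B) m t)).

Lemma G_step l f j t : Ck (l-1) f -> (j+2 <= l)%nat -> 0 < t ->
  is_derive (G l f j) t (t * G l f (S j) t).
Proof.
  intros Hf Hj Ht.
  set (D := fun m B => cc l j m B * (t * (- INR (l+1-(j-m-B)) * term f (l+1-(j-m-B)-1) (1+j+B+1) m t
     - INR (1+j+B) * term f (l+1-(j-m-B)) (1+j+B+2) m t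
     - term f (l+1-(j-m-B)) (1+j+B+1) (S m) t))).
  assert (Hd : is_derive (G l f j) t ((-1)^j * sN l (fun m => sN l (fun B => D m B)))).
  { unfold G. apply is_derive_scal.
    apply (is_derive_sN l (fun m x => sN l (fun B => cc l j m B * term f (l+1-(j-m-B)) (1+j+B) m x))).
    intros m Hm.
    apply (is_derive_sN l (fun B x => cc l j m B * term f (l+1-(j-m-B)) (1+j+B) m x)).
    intros B HB.
    destruct (le_lt_dec (m+B) j) as [H1|H1].
    - unfold D. apply is_derive_scal. apply term_deriv; [exact Ht|].
      destruct (Hf (S m) ltac:(lia)) as [Hex _]. exact (Hex (1 - t)).
    - unfold D. rewrite (cc_zero l j m B H1). rewrite Rmult_0_l.
      apply (is_derive_ext (fun _ => 0)). { intros; cbv beta; symmetry; apply Rmult_0_l. }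
      apply (is_derive_const (V:=R_NormedModule) 0 t). }
  replace (t * G l f (S j) t) with ((-1)^j * sN l (fun m => sN l (fun B => D m B))); [exact Hd|].
  destruct l as [|n]; [lia|].
  pose (Tt := fun m B => term f (S n + 1 - (S j - m - B)) (1 + S j + B) m t).
  pose (X1 := fun m B => cc (S n) j m B * INR (S n + 1 - (j - m - B))).
  pose (X2 := fun m B => cc (S n) j m B * INR (1 + j + B)).
  pose (X3 := fun m B => cc (S n) j m B).
  assert (HD : forall m B, D m B = -t * (X1 m B * Tt m B + X2 m B * Tt m (S B) + X3 m B * Tt (S m) B)).
  { intros m B. unfold D, X1, X2, X3, Tt.
    replace (S n + 1 - (S j - m - S B))%nat with (S n + 1 - (j - m - B))%nat by lia.
    replace (1 + S j + S B)%nat with (1 + j + B + 2)%nat by lia.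
    replace (S n + 1 - (S j - S m - B))%nat with (S n + 1 - (j - m - B))%nat by lia.
    replace (1 + S j + B)%nat with (1 + j + B + 1)%nat by lia.
    destruct (le_lt_dec (m+B) j) as [H1|H1].
    - replace (S n + 1 - (S j - m - B))%nat with (S n + 1 - (j - m - B) - 1)%nat by lia.
      ring.
    - rewrite (cc_zero _ j m B H1). ring. }
  rewrite (sN_ext _ _ (fun m => -t * sN (S n) (fun B =>
      X1 m B * Tt m B + X2 m B * Tt m (S B) + X3 m B * Tt (S m) B))).
  2:{ intros m _. rewrite <- sN_scal. apply sN_ext. intros B _. apply HD. }
  rewrite sN_scal.
  rewrite double_shift.
  2:{ intros m. unfold X2. rewrite cc_zero by lia. ring. }
  2:{ intros B. unfold X3. rewrite cc_zero by lia. reflexivity. }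
  unfold G. simpl pow.
  rewrite (sN_ext _ _ (fun m => sN (S n) (fun B => cc (S n) (S j) m B *
     term f (S n + 1 - (S j - m - B)) (1 + S j + B) m t))).
  { ring. }
  intros m _. apply sN_ext. intros B _.
  unfold X1, X2, X3, Tt. rewrite <- cc_rec by lia. reflexivity.
Qed.

Lemma sum0 (F : nat -> R) n : sum_n_m F 0 n = sN (S n) F.
Proof.
  induction n.
  - rewrite sum_n_n. simpl. ring.
  - rewrite sum_n_Sm by lia. rewrite IHn. reflexivity.
Qed.

Lemma sumk (g : nat -> R) m k : sum_n_m g m (m + k) = sN (S k) (fun B => g (m + B)%nat).
Proof.
  induction k.
  - rewrite Nat.add_0_r, sum_n_n. simpl. rewrite Nat.add_0_r. ring.
  - replace (m + S k)%nat with (S (m + k)) by lia.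
    rewrite sum_n_Sm by lia. rewrite IHk.
    change (sN (S k) (fun B => g (m + B)%nat) + g (S (m + k)) =
            sN (S k) (fun B => g (m + B)%nat) + g (m + S k)%nat).
    replace (m + S k)%nat with (S (m + k)) by lia. reflexivity.
Qed.

Lemma Diter_G l f : (1 <= l)%nat -> Ck (l - 1) f ->
  forall j, (j <= l - 1)%nat -> forall t, 0 < t -> Diter j (T l f) t = G l f j t.
Proof.
  intros Hl Hf j. induction j; intros Hj t Ht.
  - simpl. unfold T, G. destruct l as [|n]; [lia|].
    rewrite sN_shift. rewrite (sN_zero n).
    2:{ intros i _. apply sN_zero. intros B _. rewrite cc_zero by lia. ring. }
    rewrite sN_shift. rewrite (sN_zero n).
    2:{ intros i _. rewrite cc_zero by lia. ring. }
    rewrite (cc_val (S n) 0 0 0 0) by lia. unfold term. simpl sN.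
    replace (S n + 1 - (0 - 0 - 0))%nat with (S n + 1)%nat by lia.
    replace (S n + 1 - 0)%nat with (S n + 1)%nat by lia.
    simpl Derive_n. simpl pow. rewrite ?Nat.add_0_r. change (fact 0) with 1%nat. change (INR 1) with 1.
    setfacts. field. lra.
  - change (Diter (S j) (T l f) t) with (Dop (Diter j (T l f)) t). unfold Dop.
    rewrite (Derive_ext_loc _ (G l f j)).
    + rewrite (is_derive_unique _ _ _ (G_step l f j t Hf ltac:(lia) Ht)). field. lra.
    + apply filter_imp with (fun x => 0 < x).
      * intros x Hx. apply IHj; [lia|exact Hx].
      * apply (open_gt 0). exact Ht.
Qed.

Theorem lemma3p4 (l : nat) (f : R -> R) (Hl : (1 <= l)%nat) (Hf : Ck (l - 1) f)
  (t : R) (Ht : 0 < t) :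
  Diter (l - 1) (T l f) t
  = (-1) ^ (l - 1) * sum_n_m (fun m => P m l t * Derive_n f m (1 - t)) 0 (l - 1).
Proof.
  rewrite (Diter_G l f Hl Hf (l-1) ltac:(lia) t Ht).
  unfold G. destruct l as [|n]; [lia|].
  replace (S n - 1)%nat with n by lia.
  rewrite sum0. f_equal. apply sN_ext. intros m Hm.
  unfold P. replace (S n - 1)%nat with (m + (n - m))%nat by lia.
  rewrite sumk. rewrite Rmult_comm, <- sN_scal.
  rewrite (sN_zero_tail (S (n - m)) (S n)).
  2: lia.
  2:{ intros B HB. rewrite cc_zero by lia. ring. }
  apply sN_ext. intros B HB.
  rewrite (cc_val (S n) n m B (n - m - B)) by lia.
  unfold term, E, binomR.
  rewrite (proj2 (Nat.leb_le _ _)) by lia.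
  rewrite (proj2 (Nat.leb_le (m + B - m) _)) by lia.
  unfold Binomial.C.
  replace (n - m - B)%nat with (n - m - B)%nat by lia.
  replace (S n + 1 - (n - m - B))%nat with (m + B + 2)%nat by lia.
  replace (S n + 1 - (m + B + 2))%nat with (n - m - B)%nat by lia.
  replace (S n - 1)%nat with n by lia.
  replace (m + B - m)%nat with B by lia.
  replace (n + (m + B) - m)%nat with (n + B)%nat by lia.
  replace (n + B - B)%nat with n by lia.
  replace (1 + n + B)%nat with (m + B + S n - m)%nat by lia.
  setfacts. pose proof (p2nz B).
  assert (t ^ (m + B + S n - m) <> 0) by (apply pow_nonzero; lra).
  field. repeat split; assumption.
Qed.
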